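(* Consider an irreducible Markov chain on $n$ states whose transition probabilities are rational numbers whose denominators all divide a positive integer $M$. Let $k\le n$ be the number of states having at least two possible successors (i.e. at least two states reachable in one step with positive probability). Let $\pi\in(0,1]^n$ be the invariant probability measure of the chain. Then the least common denominator of the rational numbers $\pi_1,\dots,\pi_n$ is at most $n M^{\min\{k,n-1\}}$. *)

(* Defs.v *)
From HB Require Import structures.
From mathcomp Require Import all_boot all_order all_algebra.
Set Implicit Arguments. Unset Strict Implicit. Unset Printing Implicit Defensive.
Import Order.TTheory GRing.Theory Num.Theory.
Local Open Scope ring_scope.

Definition stochastic (n : nat) (P : 'M[rat]_n) : Prop :=
  (forall i j, 0 <= P i j) /\ (forall i, \sum_(j < n) P i j = 1).

Definition trans_rel (n : nat) (P : 'M[rat]_n) : rel 'I_n :=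
  fun i j => 0 < P i j.

Definition irreducible (n : nat) (P : 'M[rat]_n) : Prop :=
  forall i j, connect (trans_rel P) i j.

Definition denoms_divide (n : nat) (P : 'M[rat]_n) (M : nat) : Prop :=
  forall i j, (absz (denq (P i j)) %| M)%N.

Definition branching_states (n : nat) (P : 'M[rat]_n) : nat :=
  #|[set i : 'I_n | (1 < #|[set j : 'I_n | (0 < P i j)%R]|)%N]|.

Definition invariant_prob (n : nat) (P : 'M[rat]_n) (pi : 'rV[rat]_n) : Prop :=
  (forall i, 0 <= pi 0 i) /\ \sum_(i < n) pi 0 i = 1 /\ pi *m P = pi.

Definition lcd (n : nat) (v : 'rV[rat]_n) : nat :=
  \big[lcmn/1%N]_(i < n) absz (denq (v 0 i)).

(* Main.v *)
Require Import Defs.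
From HB Require Import structures.
From mathcomp Require Import all_boot all_order all_algebra.
From mathcomp Require Import zify.
From Stdlib Require Import Lia.
Import Order.TTheory GRing.Theory Num.Theory.
Set Implicit Arguments. Unset Strict Implicit. Unset Printing Implicit Defensive.
Local Open Scope ring_scope.

Lemma den_dvd (x : rat) (s : nat) : x * s%:R \is a Num.int -> (absz (denq x) %| s)%N.
Proof.
move=> /intrP [y Hy].
have E : numq x * s%:Z = y * denq x.
  apply: (@intr_inj rat); rewrite !intrM numqE -Hy.
  by rewrite -mulrA [_%:~R * _]mulrC mulrA.
have : (denq x %| numq x * s%:Z)%Z by rewrite E dvdz_mull ?dvdzz.
rewrite Gauss_dvdzr; first by [].
by rewrite coprimez_sym coprimezE coprime_num_den.
Qed.

Lemma den_int (x : rat) (M : nat) : (absz (denq x) %| M)%N -> x * M%:R \is a Num.int.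
Proof.
case/dvdnP => q Hq.
have -> : M%:R = (q%:R * (denq x)%:~R : rat).
  by rewrite Hq natrM -[in RHS](absz_denq x) pmulrn.
by rewrite mulrC -mulrA [_%:~R * x]mulrC -numqE rpredM ?intr_int // natr_int.
Qed.

Local Close Scope ring_scope.
Section Trees.
Variable n : nat.
Notation T := 'I_n.
Notation FF := {ffun T -> T}.

Implicit Types (f g : FF) (a b i j r u x : T).
Definition upd (g : FF) (a b : T) : FF := [ffun x => if x == a then b else g x].

Lemma upd_at g a b : upd g a b a = b. Proof. by rewrite ffunE eqxx. Qed.
Lemma upd_off g a b x : x != a -> upd g a b x = g x.
Proof. by rewrite ffunE => /negPf ->. Qed.
Lemma upd_upd g a b c : upd (upd g a b) a c = upd g a c.
Proof. by apply/ffunP => x; rewrite !ffunE; case: eqP. Qed.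
Lemma upd_id g a : g a = a -> upd g a a = g.
Proof. by move=> H; apply/ffunP => x; rewrite !ffunE; case: eqP => // ->. Qed.
Lemma upd_same g a : upd g a (g a) = g.
Proof. by apply/ffunP => x; rewrite !ffunE; case: eqP => // ->. Qed.

Lemma reachP (g : T -> T) u v : reflect (exists t, iter t g u = v) (fconnect g u v).
Proof.
apply: (iffP idP) => [H|[t <-]]; last exact: fconnect_iter.
by exists (findex g u v); apply: iter_findex.
Qed.

Lemma agree_iter (g g' : T -> T) a u t :
  (forall x, x != a -> g' x = g x) -> (forall s, s < t -> iter s g u != a) ->
  iter t g' u = iter t g u.
Proof.
move=> Hg; elim: t => [//|t IH] Hs /=.
rewrite IH; last by move=> s Hst; apply: Hs; apply: ltnW.
by apply: Hg; apply: Hs.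
Qed.

Lemma reach_agree (g g' : T -> T) a u :
  (forall x, x != a -> g' x = g x) -> fconnect g u a -> fconnect g' u a.
Proof.
move=> Hg /reachP [t0 Ht0]; apply/reachP.
have Hex : exists t, iter t g u == a by exists t0; apply/eqP.
have [t /eqP Ht Hmin] := ex_minnP Hex.
exists t; rewrite (agree_iter Hg) //.
move=> s Hst; apply/negP => Hs.
by have := Hmin s Hs; rewrite leqNgt Hst.
Qed.

Lemma reach_upd g a b u : fconnect g u a -> fconnect (upd g a b) u a.
Proof. by apply: reach_agree => x Hx; rewrite upd_off. Qed.

Lemma reach_upd' g a b u : fconnect (upd g a b) u a -> fconnect g u a.
Proof. by apply: reach_agree => x Hx; rewrite upd_off. Qed.

Definition Arb (r : T) (f : FF) : bool := (f r == r) && [forall u, fconnect f u r].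
Definition Gj (j : T) (g : FF) : bool := [forall u, fconnect g u j].

Lemma Gj_Arb j g : Gj j g = Arb j (upd g j j).
Proof.
rewrite /Arb /Gj upd_at eqxx /=.
apply/forallP/forallP => H u; [exact: reach_upd | exact: (reach_upd' (H u))].
Qed.

Lemma Arb_upd i f : Arb i f = Arb i (upd f i i) && (upd f i i == f).
Proof.
rewrite /Arb upd_at eqxx /=.
case Hf: (f i == i).
  by rewrite (upd_id (eqP Hf)) eqxx andbT.
rewrite [X in X = _]/=; symmetry.
apply/negbTE/andP => -[_ /eqP E].
by move: Hf; rewrite -E upd_at eqxx.
Qed.

Lemma pred_unique_aux (g : T -> T) j i1 i2 t1 t2 :
  g i1 = j -> iter t1 g j = i1 -> iter t2 g j = i2 ->
  (forall t, iter t g j == i2 -> t2 <= t) -> t1 < t2 -> False.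
Proof.
move=> H1 E1 E2 Hmin Hlt.
have Hj : iter t1.+1 g j = j by rewrite iterS E1.
have E : iter (t2 - t1.+1) g j = i2.
  by rewrite -E2 -{2}(subnK Hlt) iterD Hj.
have := Hmin _ (introT eqP E); rewrite leqNgt; move/negP; apply.
lia.
Qed.

Lemma pred_unique (g : T -> T) j i1 i2 :
  g i1 = j -> g i2 = j -> fconnect g j i1 -> fconnect g j i2 -> i1 = i2.
Proof.
move=> H1 H2 /reachP [s1 R1] /reachP [s2 R2].
have R1' : exists t, iter t g j == i1 by exists s1; apply/eqP.
have R2' : exists t, iter t g j == i2 by exists s2; apply/eqP.
have [t1 /eqP E1 M1] := ex_minnP R1'.
have [t2 /eqP E2 M2] := ex_minnP R2'.
case: (ltngtP t1 t2) => Ht.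
- by case: (pred_unique_aux H1 E1 E2 M2 Ht).
- by case: (pred_unique_aux H2 E2 E1 M1 Ht).
- by rewrite -E1 -E2 Ht.
Qed.

Definition Cand (g : FF) (j i : T) : bool := (g i == j) && Arb i (upd g i i).

Lemma card_Cand g j : #|[pred i | Cand g j i]| = Gj j g.
Proof.
case HG: (Gj j g).
- have [t Ht] : exists t, iter t g (g j) = j.
    by apply/reachP; move/forallP: HG; apply.
  set i0 := iter t g j.
  have gi0 : g i0 = j by rewrite /i0 -iterS iterSr.
  have Hreach : forall u, fconnect g u i0.
    move=> u; apply: connect_trans (fconnect_iter g t j).
    by move/forallP: HG; apply.
  have -> : #|[pred i | Cand g j i]| = #|pred1 i0|.
    apply: eq_card => i; rewrite !inE /Cand /Arb upd_at eqxx /=.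
    apply/andP/eqP => [[/eqP gi /forallP Ha]|->].
      apply: (pred_unique gi gi0); last exact: fconnect_iter.
      exact: reach_upd' (Ha j).
    by split; [apply/eqP | apply/forallP => u; apply: reach_upd].
  by rewrite card1.
- apply: eq_card0 => i; rewrite !inE /Cand /Arb upd_at eqxx /=.
  apply/negbTE/andP => -[/eqP gi /forallP Ha].
  move/negbT: HG; apply/negP/negPn/forallP => u.
  apply: connect_trans (reach_upd' (Ha u)) _.
  by rewrite -gi; apply: fconnect1.
Qed.

End Trees.
Local Open Scope ring_scope.


Section Weights.
Variable n : nat.
Variable P : 'M[rat]_n.
Notation T := 'I_n.
Notation FF := {ffun T -> T}.
Implicit Types (f g : FF) (a b i j l r u x : T).

Definition W g := \prod_u P u (g u).
Definition wt f r := \prod_(u | u != r) P u (f u).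
Definition w r := \sum_(f | Arb r f) wt f r.

Lemma W_upd f i j : W (upd f i j) = wt f i * P i j.
Proof.
rewrite /W (bigD1 i) //= upd_at mulrC; congr (_ * _).
by apply: eq_bigr => u Hu; rewrite upd_off.
Qed.

Lemma sum_Cand j : \sum_i \sum_(g | Cand g j i) W g = \sum_(g | Gj j g) W g.
Proof.
under eq_bigr do rewrite big_mkcond.
rewrite exchange_big /= [RHS]big_mkcond; apply: eq_bigr => g _.
rewrite -big_mkcond /=.
have -> : \sum_(i | Cand g j i) W g = \sum_(i in [pred i | Cand g j i]) W g by [].
by rewrite sumr_const card_Cand; case: (Gj j g).
Qed.
Lemma reindex1 i j : \sum_(f | Arb i f) W (upd f i j) = \sum_(g | Cand g j i) W g.
Proof.
rewrite [RHS](reindex_onto (fun f => upd f i j) (fun g => upd g i i)) /=.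
  apply: eq_bigl => f; rewrite /Cand upd_at eqxx !upd_upd /=.
  by rewrite [LHS]Arb_upd.
by move=> g /andP [/eqP gi _]; rewrite upd_upd -{1}gi upd_same.
Qed.

Lemma reindex2 j l : \sum_(f | Arb j f) W (upd f j l) = \sum_(g | Gj j g && (g j == l)) W g.
Proof.
rewrite [RHS](reindex_onto (fun f => upd f j l) (fun g => upd g j j)) /=.
  apply: eq_bigl => f; rewrite Gj_Arb upd_at eqxx !upd_upd /=.
  by rewrite [LHS]Arb_upd andbT.
by move=> g /andP [_ /eqP gi]; rewrite upd_upd -{1}gi upd_same.
Qed.

Lemma w_inv j : (forall i, \sum_l P i l = 1) -> \sum_i w i * P i j = w j.
Proof.
move=> Hs.
transitivity (\sum_i \sum_(g | Cand g j i) W g).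
  apply: eq_bigr => i _; rewrite -reindex1 /w big_distrl /=.
  by apply: eq_bigr => f _; rewrite W_upd.
rewrite sum_Cand.
transitivity (\sum_l \sum_(f | Arb j f) W (upd f j l)).
  under [RHS]eq_bigr => l _ do rewrite reindex2.
  by rewrite (partition_big (fun g : FF => g j) xpredT).
rewrite exchange_big /w; apply: eq_bigr => f _.
by rewrite -[RHS]mulr1 -(Hs j) big_distrr /=; apply: eq_bigr => l _; rewrite W_upd.
Qed.

End Weights.

Lemma exists_min (I : finType) (F : I -> rat) (t0 : I) : exists i, forall j, F i <= F j.
Proof.
case: (@Order.TotalTheory.arg_minP _ _ I t0 xpredT F isT) => i _ H.
by exists i => j; apply: H.
Qed.

Lemma cross_edge (I : finType) (e : rel I) (S : {set I}) x y :
  connect e x y -> x \notin S -> y \in S -> exists a b, [/\ a \notin S, b \in S & e a b].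
Proof.
case/connectP => p; elim: p x => [|z p IH] x /=; first by move=> _ -> /negP.
case/andP => exz pz ly xS yS.
case zS: (z \in S); first by exists x, z.
by apply: (IH z pz ly) => //; rewrite zS.
Qed.

Section Exist.
Variable n : nat.
Variable P : 'M[rat]_n.
Notation T := 'I_n.
Notation FF := {ffun T -> T}.
Implicit Types (f g : FF) (a b i j l r u x : T).

Definition good r (S : {set T}) f : bool :=
  [&& f r == r, r \in S, [forall u in S, f u \in S], [forall u in S, fconnect f u r]
    & [forall u in S, (u != r) ==> (0 < P u (f u))]].

Lemma iter_in f (S : {set T}) u t : [forall u in S, f u \in S] -> u \in S -> iter t f u \in S.
Proof.
move=> /forall_inP H uS; elim: t => [//|t IH] /=; exact: H.
Qed.

Lemma grow r S f a b : good r S f -> a \notin S -> b \in S -> 0 < P a b ->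
  good r (a |: S) (upd f a b).
Proof.
case/and5P => /eqP fr rS /forall_inP cl /forall_inP re /forall_inP po aS bS pab.
have ar : r != a by apply: contraNneq aS => <-.
have Hit : forall u t, u \in S -> iter t (upd f a b) u = iter t f u.
  move=> u t uS; apply: (@agree_iter _ _ _ a) => [x xa|s _]; first by rewrite upd_off.
  apply: contraNneq aS => <-; apply: iter_in => //; exact/forall_inP.
have reS : forall u, u \in S -> fconnect (upd f a b) u r.
  move=> u uS; have /reachP [t Ht] := re u uS.
  by apply/reachP; exists t; rewrite Hit.
apply/and5P; split.
- by rewrite upd_off // fr.
- by rewrite !inE rS orbT.
- apply/forall_inP => u; rewrite !inE; case/orP => [/eqP ->|uS].
    by rewrite upd_at bS orbT.
  rewrite upd_off; last by apply: contraNneq aS => <-.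
  by rewrite cl ?orbT.
- apply/forall_inP => u; rewrite !inE; case/orP => [/eqP ->|uS]; last exact: reS.
  apply: connect_trans (fconnect1 _ a) _; rewrite upd_at; exact: reS.
- apply/forall_inP => u; rewrite !inE; case/orP => [/eqP ->|uS].
    by rewrite upd_at pab implybT.
  rewrite upd_off; last by apply: contraNneq aS => <-.
  exact: po.
Qed.
Lemma exists_arb r : (forall i j, connect (fun i j => 0 < P i j) i j) ->
  exists f, Arb r f /\ forall u, u != r -> 0 < P u (f u).
Proof.
move=> irr.
pose Good (S : {set T}) := [exists f, good r S f].
have G0 : Good [set r].
  apply/existsP; exists [ffun => r]; apply/and5P; split.
  - by rewrite ffunE.
  - by rewrite inE.
  - by apply/forall_inP => u _; rewrite ffunE inE.
  - by apply/forall_inP => u; rewrite inE => /eqP ->; apply: connect0.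
  - by apply/forall_inP => u; rewrite inE => ->.
case: (@arg_maxnP _ [set r] Good (fun S => #|S|) G0) => S0 /existsP [f Hf] Hmax.
case: (boolP (S0 == setT)) => [/eqP E | NT].
  exists f; move: Hf; rewrite E => /and5P [fr _ _ /forall_inP re /forall_inP po].
  split; first by rewrite /Arb fr /=; apply/forallP => u; apply: re; rewrite inE.
  by move=> u ur; have := po u (in_setT u); rewrite ur.
have [x xS] : exists x, x \notin S0.
  apply/existsP; move: NT; apply: contraNT; rewrite negb_exists => /forallP H.
  by apply/eqP/setP => u; rewrite inE; apply/negPn/H.
have rS : r \in S0 by case/and5P: Hf.
have [a [b [aS bS pab]]] := cross_edge (irr x r) xS rS.
have GS : Good (a |: S0) by apply/existsP; exists (upd f a b); apply: grow.
have := Hmax (a |: S0) GS.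
by rewrite cardsU1 aS add1n /= ltnn.
Qed.
End Exist.

Section Main.
Variable n : nat.
Variable P : 'M[rat]_n.
Notation T := 'I_n.
Notation FF := {ffun T -> T}.
Implicit Types (f g : FF) (a b i j l r u x : T).
Hypothesis P_ge0 : forall i j, 0 <= P i j.
Hypothesis P_sum : forall i, \sum_j P i j = 1.
Hypothesis irr : forall i j, connect (fun i j => 0 < P i j) i j.

Lemma wt_ge0 f r : 0 <= wt P f r.
Proof. by apply: prodr_ge0 => u _. Qed.

Lemma w_ge0 r : 0 <= w P r.
Proof. by apply: sumr_ge0 => f _; apply: wt_ge0. Qed.

Lemma w_le1 r : w P r <= 1.
Proof.
pose F u v := if u == r then (v == r)%:R else P u v.
have H1 : \prod_u \sum_v F u v = 1.
  apply: big1 => u _; rewrite /F; case: eqP => _ //.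
  by rewrite (bigD1 r) //= eqxx big1 ?addr0 // => v /negPf ->.
rewrite -H1 bigA_distr_bigA /=.
have -> : w P r = \sum_(f | Arb r f) \prod_u F u (f u).
  apply: eq_bigr => f /andP [/eqP fr _].
  rewrite (bigD1 r) //= /F eqxx fr eqxx mul1r.
  by apply: eq_bigr => u /negPf ->.
rewrite [X in _ <= X](bigID (Arb r)) /= lerDl.
apply: sumr_ge0 => f _; apply: prodr_ge0 => u _; rewrite /F.
by case: eqP => _ //; case: eqP.
Qed.

Lemma w_pos r : 0 < w P r.
Proof.
have [f [Af Pf]] := exists_arb r irr.
rewrite /w (bigD1 f) //= ltr_pwDl //; last by apply: sumr_ge0 => g _; apply: wt_ge0.
by apply: prodr_gt0 => u; apply: Pf.
Qed.

Lemma zero_prop (x : T -> rat) : (forall i, 0 <= x i) ->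
  (forall j, \sum_i x i * P i j = x j) -> forall i j, x j = 0 -> x i = 0.
Proof.
move=> x0 xinv i j xj; have /connectP [p pp Ej] := irr i j.
rewrite {j}Ej in xj.
elim: p i pp xj => [//|z p IH] i /= /andP [piz pp] xl.
have xz := IH z pp xl.
have H : x i * P i z = 0.
  apply: (@psumr_eq0P _ _ xpredT (fun k => x k * P k z)) => //.
    by move=> k _; apply: mulr_ge0.
  by rewrite xinv.
by move/eqP: H; rewrite mulf_eq0 (gt_eqF piz) orbF => /eqP.
Qed.
Lemma w_prop (p : T -> rat) : (forall i, 0 <= p i) -> \sum_i p i = 1 ->
  (forall j, \sum_i p i * P i j = p j) -> forall i, w P i = (\sum_j w P j) * p i.
Proof.
move=> p0 ps pinv i.
have ppos : forall j, 0 < p j.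
  move=> j; rewrite lt_def p0 andbT; apply/eqP => pj.
  have : \sum_i p i = 0 by apply: big1 => k _; exact: (zero_prop p0 pinv k pj).
  by rewrite ps => /eqP; rewrite oner_eq0.
have [i0 Hmin] := exists_min (fun j => w P j / p j) i.
set c := w P i0 / p i0 in Hmin.
pose x j := w P j - c * p j.
have x0 : forall j, 0 <= x j.
  move=> j; rewrite /x subr_ge0 -ler_pdivlMr ?ppos //.
have xinv : forall j, \sum_k x k * P k j = x j.
  move=> j; rewrite /x.
  under eq_bigr do rewrite mulrBl -mulrA.
  by rewrite sumrB -mulr_sumr pinv w_inv.
have xi0 : x i0 = 0 by rewrite /x /c divfK ?subrr // gt_eqF ?ppos.
have E : forall j, w P j = c * p j.
  by move=> j; apply/eqP; rewrite -subr_eq0; apply/eqP; exact: (zero_prop x0 xinv j xi0).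
have -> : \sum_j w P j = c by under eq_bigr do rewrite E; rewrite -mulr_sumr ps mulr1.
exact: E.
Qed.
End Main.

Section Integ.
Variable n M : nat.
Variable P : 'M[rat]_n.
Notation T := 'I_n.
Notation FF := {ffun T -> T}.
Implicit Types (f g : FF) (a b i j l r u x : T).
Hypothesis P_ge0 : forall i j, 0 <= P i j.
Hypothesis P_sum : forall i, \sum_j P i j = 1.
Hypothesis Pden : forall i j, (absz (denq (P i j)) %| M)%N.

Definition Bset := [set i : T | (1 < #|[set j : T | (0 < P i j)%R]|)%N].
Definition mexp := minn #|Bset| n.-1.

Lemma nonbranch_int u v : u \notin Bset -> P u v \is a Num.int.
Proof.
rewrite inE -leqNgt => /card_le1P H.
have [pv|] := ltP 0 (P u v); last first.
  by move=> pv; have -> : P u v = 0 by apply/eqP; rewrite eq_le pv P_ge0.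
have vin : v \in [set j | 0 < P u j] by rewrite inE.
have -> : P u v = 1.
  rewrite -(P_sum u) (bigD1 v) //= big1 ?addr0 // => j jv.
  apply/eqP; rewrite eq_le P_ge0 andbT leNgt; apply/negP => pj.
  have : j \in [set j | 0 < P u j] by rewrite inE.
  by rewrite (H v vin) => /eqP E; move: jv; rewrite E eqxx.
exact: int_num1.
Qed.

Lemma wt_int f r : (M ^ mexp)%:R * wt P f r \is a Num.int.
Proof.
pose A := [pred u | (u != r) && (u \in Bset)].
have cA : (#|A| <= mexp)%N.
  rewrite leq_min; apply/andP; split.
    by apply: subset_leq_card; apply/subsetP => u /andP [].
  rewrite -[X in (_ <= X.-1)%N](card_ord n) -(cardC1 r); apply: subset_leq_card; apply/subsetP => u /andP [].
  by rewrite !inE.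
have -> : (M ^ mexp)%:R = (M ^ (mexp - #|A|))%:R * \prod_(u | u != r) (if u \in Bset then M%:R else 1) :> rat.
  rewrite -big_mkcondr /= -[X in _ * X](@eq_bigl _ _ _ _ _ [pred u in A]) //.
  by rewrite prodr_const -natrX -natrM -expnD subnK.
rewrite -mulrA -big_split /= rpredM ?natr_int //.
apply: rpred_prod => u _; case: ifP => uB.
  by rewrite mulrC den_int.
by rewrite mul1r nonbranch_int ?uB.
Qed.

Lemma w_int r : (M ^ mexp)%:R * w P r \is a Num.int.
Proof. by rewrite /w mulr_sumr rpred_sum // => f _; apply: wt_int. Qed.
End Integ.


Theorem mainTheorem8 (n M : nat) (P : 'M[rat]_n) (pi : 'rV[rat]_n) :
  (0 < M)%N -> stochastic P -> irreducible P -> denoms_divide P M ->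
  invariant_prob P pi ->
  (lcd pi <= n * M ^ minn (branching_states P) n.-1)%N.
Proof.
move=> M0 [P0 Ps] irr Pden [pi0 [pis piinv]].
have pinv : forall j, (\sum_i pi 0 i * P i j = pi 0 j)%R.
  by move=> j; have := congr1 (fun A : 'M[rat]_(1,n) => A 0 j) piinv; rewrite mxE.
case: n P pi P0 Ps irr Pden pi0 pis piinv pinv => [|n'] P pi P0 Ps irr Pden pi0 pis piinv pinv.
  by move: pis; rewrite big_ord0 => /eqP; rewrite eq_sym oner_eq0.
set n := n'.+1.
have Hprop := w_prop P0 Ps irr pi0 pis pinv.
set S := (\sum_j w P j)%R in Hprop.
have S0 : (0 < S)%R.
  rewrite /S (bigD1 ord0) //= ltr_pwDl ?w_pos //.
  by apply: sumr_ge0 => j _; apply: w_ge0.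
have Sint : ((M ^ mexp P)%:R * S)%R \is a Num.nat.
  rewrite natrEint mulr_ge0 ?ltW ?ler0n // ?andbT; last by rewrite ltr0n expn_gt0 M0.
  rewrite /S mulr_sumr rpred_sum // => j _.
  exact: (w_int P0 Ps Pden j).
case/natrP: Sint => s Hs.
have spos : (0 < s)%N.
  by rewrite -(ltr_nat rat) -Hs mulr_gt0 // ltr0n expn_gt0 M0.
have dv : (lcd pi %| s)%N.
  apply/dvdn_biglcmP => i _; apply: den_dvd.
  rewrite -Hs mulrCA [pi 0 i * S]mulrC -Hprop; exact: (w_int P0 Ps Pden i).
apply: leq_trans (dvdn_leq spos dv) _.
rewrite -(ler_nat rat) -Hs natrM mulrC.
change (minn (branching_states P) n.-1) with (mexp P).
apply: ler_wpM2r; first exact: ler0n.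
apply: (@le_trans _ _ (\sum_(j < n) (1 : rat))).
  by apply: ler_sum => j _; apply: w_le1.
by rewrite sumr_const card_ord.
Qed.
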